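(* Let $m\ge1$, $\lambda=(\lambda_1,\dots,\lambda_m)$ with nonzero real $\lambda_j$, and let $\mathfrak{g}_m(\lambda)$ be the oscillator algebra with basis $P,X_1,\dots,X_m,Y_1,\dots,Y_m,Q$ and the only nonzero brackets $[X_i,Y_j]=\delta_{ij}P$, $[Q,X_j]=\lambda_jY_j$, $[Q,Y_j]=-\lambda_jX_j$; let $G_m(\lambda)$ be the corresponding simply connected oscillator group. For $\varepsilon\in\mathbb{R}$ let $g_\varepsilon$ be the left-invariant metric with $g_\varepsilon(P,P)=g_\varepsilon(Q,Q)=\varepsilon$, $g_\varepsilon(P,Q)=1$, $g_\varepsilon(X_i,X_j)=g_\varepsilon(Y_i,Y_j)=\delta_{ij}$, and all other pairings of basis vectors zero. Every derivation $D$ of $\mathfrak{g}_m(\lambda)$ is written as $DP=\alpha P$, $DX_j=a_jP+\sum_l b^l_jX_l+\sum_l c^l_jY_l$, $DY_j=\tilde a_jP+\sum_l B^l_jX_l+\sum_l C^l_jY_l$, $DQ=\mu P-\sum_l\lambda_la_lX_l-\sum_l\lambda_l\tilde a_lY_l$ with real coefficients. Suppose $g_\varepsilon$ satisfies the solvsoliton equation $\mathrm{ric}=c\,\mathrm{Id}+D$ for some $c\in\mathbb{R}$ and some derivation $D$ of $\mathfrak{g}_m(\lambda)$. Then $\varepsilon=c=0$, $\mu=m/2$, and $\alpha=a_j=\tilde a_j=b^i_j=c^i_j=0$ for all $i,j$. Consequently the left-invariant Lorentzian metric $g_0$ is a steady solvsoliton (i.e. a solvsoliton with $c=0$).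
   Context: $\mathrm{ric}$ is the Ricci operator of $g_\varepsilon$, defined by $g_\varepsilon(\mathrm{ric}X,Y)=\mathrm{Ric}(X,Y)$. A left-invariant pseudo-Riemannian metric on a simply connected solvable Lie group is a solvsoliton if $\mathrm{ric}=c\,\mathrm{Id}+D$ for some $c\in\mathbb{R}$ and some derivation $D$ of the Lie algebra; it is called steady if $c=0$. *)

(* Defs.v *)
From HB Require Import structures.
From mathcomp Require Import all_boot all_order all_algebra.
Set Implicit Arguments. Unset Strict Implicit. Unset Printing Implicit Defensive.
Import Order.TTheory GRing.Theory Num.Theory.
Local Open Scope ring_scope.

(* index set of the basis: inl false = P, inl true = Q,
   inr (inl i) = X_(i+1), inr (inr i) = Y_(i+1) *)
Definition idx (m : nat) : finType := (bool + ('I_m + 'I_m))%type.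
Definition eP {m} : idx m := inl false.
Definition eQ {m} : idx m := inl true.
Definition eX {m} (i : 'I_m) : idx m := inr (inl i).
Definition eY {m} (i : 'I_m) : idx m := inr (inr i).

Section Osc.
Variables (R : realFieldType) (m : nat).

Definition vec := idx m -> R.
Definition ebas (a : idx m) : vec := fun k => (k == a)%:R.

(* structure constants: [e_a, e_b] = \sum_k br lam a b k e_k *)
Definition br (lam : 'I_m -> R) (a b k : idx m) : R :=
  match a, b with
  | inr (inl i), inr (inr j) => if (i == j) && (k == eP) then 1 else 0
  | inr (inr j), inr (inl i) => if (i == j) && (k == eP) then -1 else 0
  | inl true, inr (inl j) => if k == eY j then lam j else 0
  | inr (inl j), inl true => if k == eY j then - lam j else 0
  | inl true, inr (inr j) => if k == eX j then - lam j else 0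
  | inr (inr j), inl true => if k == eX j then lam j else 0
  | _, _ => 0
  end.

Definition brv (lam : 'I_m -> R) (u v : vec) : vec :=
  fun k => \sum_a \sum_b u a * v b * br lam a b k.

Definition gm (eps : R) (a b : idx m) : R :=
  match a, b with
  | inl false, inl false => eps
  | inl true, inl true => eps
  | inl _, inl _ => 1
  | inr (inl i), inr (inl j) => (i == j)%:R
  | inr (inr i), inr (inr j) => (i == j)%:R
  | _, _ => 0
  end.

Definition gv (eps : R) (u v : vec) : R := \sum_a \sum_b u a * v b * gm eps a b.

Definition gmx (eps : R) : 'M[R]_#|{: idx m}| :=
  \matrix_(i, j) gm eps (enum_val i) (enum_val j).
Definition ginv (eps : R) (a b : idx m) : R :=
  invmx (gmx eps) (enum_rank a) (enum_rank b).

(* Koszul formula for left-invariant fields: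
   2 g(nabla_a e_b, e_c) = g([a,b],c) - g([b,c],a) + g([c,a],b) *)
Definition koszul (lam : 'I_m -> R) (eps : R) (a b c : idx m) : R :=
  (gv eps (brv lam (ebas a) (ebas b)) (ebas c)
   - gv eps (brv lam (ebas b) (ebas c)) (ebas a)
   + gv eps (brv lam (ebas c) (ebas a)) (ebas b)) / 2.

(* Levi-Civita connection: nabla_{e_a} e_b = \sum_k nab a b k e_k *)
Definition nab (lam : 'I_m -> R) (eps : R) (a b k : idx m) : R :=
  \sum_c koszul lam eps a b c * ginv eps c k.

Definition nabv (lam : 'I_m -> R) (eps : R) (u v : vec) : vec :=
  fun k => \sum_a \sum_b u a * v b * nab lam eps a b k.

Definition curv (lam : 'I_m -> R) (eps : R) (u v w : vec) : vec :=
  fun k => nabv lam eps u (nabv lam eps v w) k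
           - nabv lam eps v (nabv lam eps u w) k
           - nabv lam eps (brv lam u v) w k.

Definition Ric (lam : 'I_m -> R) (eps : R) (b c : idx m) : R :=
  \sum_a curv lam eps (ebas a) (ebas b) (ebas c) a.

(* Ricci operator: g(ric e_a, e_b) = Ric(e_a, e_b);
   ric e_a = \sum_k ricop a k e_k *)
Definition ricop (lam : 'I_m -> R) (eps : R) (a k : idx m) : R :=
  \sum_b Ric lam eps a b * ginv eps b k.

(* a linear map D given by D e_a = \sum_k D a k e_k is a derivation *)
Definition is_derivation (lam : 'I_m -> R) (D : idx m -> idx m -> R) : Prop :=
  forall a b k : idx m,
    \sum_c br lam a b c * D c k
    = \sum_c D a c * br lam c b k + \sum_c D b c * br lam a c k.

Definition solvsoliton_eq (lam : 'I_m -> R) (eps c : R)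
    (D : idx m -> idx m -> R) : Prop :=
  forall a k : idx m, ricop lam eps a k = c * (a == k)%:R + D a k.

Definition is_steady_solvsoliton (lam : 'I_m -> R) (eps : R) : Prop :=
  exists D, is_derivation lam D /\ solvsoliton_eq lam eps 0 D.

End Osc.

(* Main.v *)
Require Import Defs.
From HB Require Import structures.
From mathcomp Require Import all_boot all_order all_algebra.
From mathcomp Require Import ring lra.
Import Order.TTheory GRing.Theory Num.Theory.
Set Implicit Arguments. Unset Strict Implicit. Unset Printing Implicit Defensive.
Local Open Scope ring_scope.

Lemma sum_idx (R : realFieldType) (m : nat) (F : idx m -> R) :
  \sum_a F a = F eP + F eQ + \sum_i F (eX i) + \sum_i F (eY i).
Proof.
rewrite big_sumType big_bool /= big_sumType addrA; congr (_ + _ + _).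
by rewrite addrC.
Qed.

Lemma sum_if (R : realFieldType) (m : nat) (t : idx m) (v : R) (F : idx m -> R) :
  \sum_k (if k == t then v else 0) * F k = v * F t.
Proof.
rewrite (bigD1 t) //= eqxx big1 ?addr0 // => k /negbTE ->; by rewrite mul0r.
Qed.

Lemma sum_ebas1 (R : realFieldType) (m : nat) (x : idx m) (F : idx m -> R) :
  \sum_a ebas R x a * F a = F x.
Proof.
rewrite (eq_bigr (fun a => (if a == x then 1 else 0) * F a)) ?sum_if ?mul1r //.
by move=> a _; rewrite /ebas; case: (a == x).
Qed.

Lemma sum2_ebas (R : realFieldType) (m : nat) (x y : idx m) (F : idx m -> idx m -> R) :
  \sum_a \sum_b ebas R x a * ebas R y b * F a b = F x y.
Proof.
rewrite (eq_bigr (fun a => ebas R x a * \sum_b ebas R y b * F a b)).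
  by rewrite sum_ebas1 sum_ebas1.
by move=> a _; rewrite mulr_sumr; apply: eq_bigr => b _; rewrite mulrA.
Qed.

Lemma brv_ebas (R : realFieldType) (m : nat) lam (x y : idx m) k :
  brv lam (ebas R x) (ebas R y) k = br lam x y k.
Proof. rewrite /brv. exact: (sum2_ebas x y (fun a b => br lam a b k)). Qed.

Lemma nabv_ebasl (R : realFieldType) (m : nat) lam eps (x : idx m) (w : vec R m) k :
  nabv lam eps (ebas R x) w k = \sum_b w b * nab lam eps x b k.
Proof.
rewrite /nabv (eq_bigr (fun a => ebas R x a * \sum_b w b * nab lam eps a b k)).
  by rewrite sum_ebas1.
by move=> a _; rewrite mulr_sumr; apply: eq_bigr => b _; rewrite mulrA.
Qed.

Lemma nabv_ebasr (R : realFieldType) (m : nat) lam eps (u : vec R m) (y : idx m) k :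
  nabv lam eps u (ebas R y) k = \sum_a u a * nab lam eps a y k.
Proof.
rewrite /nabv; apply: eq_bigr => a _.
rewrite (eq_bigr (fun b => ebas R y b * (u a * nab lam eps a b k))) ?sum_ebas1 //.
by move=> b _; ring.
Qed.

Lemma gv_ebasr (R : realFieldType) (m : nat) eps (u : vec R m) (y : idx m) :
  gv eps u (ebas R y) = \sum_a u a * gm eps a y.
Proof.
rewrite /gv; apply: eq_bigr => a _.
rewrite (eq_bigr (fun b => ebas R y b * (u a * gm eps a b))) ?sum_ebas1 //.
by move=> b _; ring.
Qed.

(* single-target bracket *)
Definition bt {m} (a b : idx m) : idx m :=
  match a, b with
  | inr (inl i), inr (inr j) => eP
  | inr (inr j), inr (inl i) => eP
  | inl true, inr (inl j) => eY j
  | inr (inl j), inl true => eY j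
  | inl true, inr (inr j) => eX j
  | inr (inr j), inl true => eX j
  | _, _ => eP
  end.
Definition bc {R : realFieldType} {m} (lam : 'I_m -> R) (a b : idx m) : R :=
  match a, b with
  | inr (inl i), inr (inr j) => (i == j)%:R
  | inr (inr j), inr (inl i) => - (i == j)%:R
  | inl true, inr (inl j) => lam j
  | inr (inl j), inl true => - lam j
  | inl true, inr (inr j) => - lam j
  | inr (inr j), inl true => lam j
  | _, _ => 0
  end.

Lemma br_st (R : realFieldType) (m : nat) (lam : 'I_m -> R) a b k :
  br lam a b k = if k == bt a b then bc lam a b else 0.
Proof.
case: a => [[]|[i|i]]; case: b => [[]|[j|j]] //=; try by case: (_ == _).
- by case: (i == j); case: (k == eP).
- by case: (j == i); case: (k == eP); rewrite /= ?oppr0.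
Qed.

Lemma sum_br (R : realFieldType) (m : nat) (lam : 'I_m -> R) a b (F : idx m -> R) :
  \sum_k br lam a b k * F k = bc lam a b * F (bt a b).
Proof.
rewrite (eq_bigr (fun k => (if k == bt a b then bc lam a b else 0) * F k)) ?sum_if //.
by move=> k _; rewrite br_st.
Qed.

Lemma gv_br (R : realFieldType) (m : nat) (lam : 'I_m -> R) eps a b c :
  gv eps (brv lam (ebas R a) (ebas R b)) (ebas R c) = bc lam a b * gm eps (bt a b) c.
Proof.
rewrite gv_ebasr -(sum_br lam a b (fun k => gm eps k c)); apply: eq_bigr => k _.
by rewrite brv_ebas.
Qed.

Definition nt {m} (a b : idx m) : idx m :=
  match a, b with
  | inl false, inr (inl j) => eY j
  | inl false, inr (inr j) => eX j
  | inl true, inr (inl j) => eY j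
  | inl true, inr (inr j) => eX j
  | inr (inl j), inl _ => eY j
  | inr (inr j), inl _ => eX j
  | _, _ => eP
  end.
Definition nv {R : realFieldType} {m} (lam : 'I_m -> R) (eps : R) (a b : idx m) : R :=
  match a, b with
  | inl false, inr (inl j) => - (eps / 2)
  | inl false, inr (inr j) => eps / 2
  | inl true, inr (inl j) => lam j - 1 / 2
  | inl true, inr (inr j) => 1 / 2 - lam j
  | inr (inl j), inl false => - (eps / 2)
  | inr (inl j), inl true => - (1 / 2)
  | inr (inr j), inl false => eps / 2
  | inr (inr j), inl true => 1 / 2
  | inr (inl i), inr (inr j) => (i == j)%:R / 2
  | inr (inr i), inr (inl j) => - ((i == j)%:R / 2)
  | _, _ => 0
  end.

Lemma eqLL m (x y : bool) : (inl x == inl y :> idx m) = (x == y). Proof. by []. Qed.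
Lemma eqLR m (x : bool) (y : 'I_m + 'I_m) : (inl x == inr y :> idx m) = false. Proof. by []. Qed.
Lemma eqRL m (x : bool) (y : 'I_m + 'I_m) : (inr y == inl x :> idx m) = false. Proof. by []. Qed.
Lemma eqXX m (i j : 'I_m) : (inr (inl i) == inr (inl j) :> idx m) = (i == j). Proof. by []. Qed.
Lemma eqYY m (i j : 'I_m) : (inr (inr i) == inr (inr j) :> idx m) = (i == j). Proof. by []. Qed.
Lemma eqXY m (i j : 'I_m) : (inr (inl i) == inr (inr j) :> idx m) = false. Proof. by []. Qed.
Lemma eqYX m (i j : 'I_m) : (inr (inr i) == inr (inl j) :> idx m) = false. Proof. by []. Qed.
Ltac eqs := rewrite ?eqLL ?eqLR ?eqRL ?eqXX ?eqYY ?eqXY ?eqYX.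

Ltac destr := repeat match goal with H : is_true (_ && _) |- _ => case/andP: H => ? ? end.

Ltac ordsplit :=
  rewrite /= ?eqxx; eqs; repeat (match goal with
  | H : is_true (?i != ?i) |- _ => by rewrite eqxx in H
  | H : is_true (?i != ?j) |- context [?i == ?j] => rewrite (negbTE H)
  | H : is_true (?i != ?j) |- context [?j == ?i] => rewrite [j == i]eq_sym (negbTE H)
  | |- context [?i == ?j] => is_var i; is_var j;
       let E := fresh "E" in case: (eqVneq i j) => E; [subst i|]
  end; rewrite /= ?eqxx; eqs).

Ltac fin := rewrite ?mulr1n ?mulr0n; solve [done | ring | field; done].

Ltac ptz := move=> ? ?; destr; ordsplit; fin.

Ltac sum1 := first
  [ rewrite big1; [| by ptz]
  | match goal with j : _ |- _ => is_var j; rewrite (bigD1 j) /=; [| by destr; ordsplit] end ].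

Ltac sumtac := repeat sum1.

Lemma koszul_cf (R : realFieldType) (m : nat) (lam : 'I_m -> R) eps a b c :
  koszul lam eps a b c = nv lam eps a b * gm eps (nt a b) c.
Proof.
rewrite /koszul !gv_br /bc /gm /bt /nv /nt.
case: a => [[]|[i|i]]; case: b => [[]|[j|j]]; case: c => [[]|[l|l]]; ordsplit.
all: rewrite ?mulr1n ?mulr0n.
all: try field.
all: done.
Qed.

Definition gcf {R : realFieldType} {m} (eps : R) (a b : idx m) : R :=
  match a, b with
  | inl x, inl y => if x == y then eps / (eps ^+ 2 - 1) else - 1 / (eps ^+ 2 - 1)
  | inr (inl i), inr (inl j) => (i == j)%:R
  | inr (inr i), inr (inr j) => (i == j)%:R
  | _, _ => 0
  end.

Lemma sum_ord_delta (R : realFieldType) (m : nat) (j : 'I_m) (F : 'I_m -> R) :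
  \sum_i (i == j)%:R * F i = F j.
Proof.
rewrite (bigD1 j) //= eqxx mul1r big1 ?addr0 // => i /negbTE ->; by rewrite mul0r.
Qed.

Lemma GI (R : realFieldType) (m : nat) (eps : R) (x y : idx m) :
  eps ^+ 2 - 1 != 0 ->
  \sum_c gm eps x c * gcf eps c y = (x == y)%:R.
Proof.
move=> hd; rewrite sum_idx /gm /gcf.
case: x => [[]|[i|i]]; case: y => [[]|[j|j]] /=; sumtac; ordsplit.
all: rewrite ?mulr1n ?mulr0n ?addr0; try solve [done | ring | field; done].
Qed.

Lemma ginv_cf (R : realFieldType) (m : nat) (eps : R) (a b : idx m) :
  eps ^+ 2 - 1 != 0 -> ginv eps a b = gcf eps a b.
Proof.
move=> hd.
set G' := \matrix_(i, j) gcf eps (enum_val i) (enum_val j) : 'M[R]_#|{: idx m}|.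
have H : @gmx R m eps *m G' = 1%:M.
  apply/matrixP => r s; rewrite !mxE.
  rewrite (eq_bigr (fun t => gm eps (enum_val r) (enum_val t) * gcf eps (enum_val t) (enum_val s))); last first.
    by move=> t _; rewrite !mxE.
  rewrite -(big_enum_val (A := {: idx m}) (fun x => gm eps (enum_val r) x * gcf eps x (enum_val s))).
  rewrite (eq_bigl (fun=> true)) //.
  have := GI (enum_val r) (enum_val s) hd; rewrite (inj_eq enum_val_inj) => <-.
  by [].
have [Hu _] := mulmx1_unit H.
have E : invmx (@gmx R m eps) = G'.
  by rewrite -[in RHS](mulKmx Hu G') H mulmx1.
by rewrite /ginv E mxE !enum_rankK.
Qed.

Lemma nab_cf (R : realFieldType) (m : nat) (lam : 'I_m -> R) eps a b k :
  eps ^+ 2 - 1 != 0 ->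
  nab lam eps a b k = if k == nt a b then nv lam eps a b else 0.
Proof.
move=> hd; rewrite /nab.
rewrite (eq_bigr (fun c => nv lam eps a b * (gm eps (nt a b) c * gcf eps c k))); last first.
  by move=> c _; rewrite koszul_cf ginv_cf // mulrA.
rewrite -mulr_sumr GI // eq_sym; by case: (k == nt a b); rewrite ?mulr1 ?mulr0.
Qed.

Lemma nabv_ee (R : realFieldType) (m : nat) (lam : 'I_m -> R) eps b c y :
  nabv lam eps (ebas R b) (ebas R c) y = nab lam eps b c y.
Proof. by rewrite nabv_ebasl sum_ebas1. Qed.

Lemma curv_cf (R : realFieldType) (m : nat) (lam : 'I_m -> R) eps a b c k :
  eps ^+ 2 - 1 != 0 ->
  curv lam eps (ebas R a) (ebas R b) (ebas R c) k =
  nv lam eps b c * nab lam eps a (nt b c) k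
  - nv lam eps a c * nab lam eps b (nt a c) k
  - bc lam a b * nab lam eps (bt a b) c k.
Proof.
move=> hd; rewrite /curv !nabv_ebasl nabv_ebasr.
congr (_ - _ - _).
- rewrite -(sum_if (nt b c) (nv lam eps b c) (fun y => nab lam eps a y k)).
  by apply: eq_bigr => y _; rewrite nabv_ee nab_cf.
- rewrite -(sum_if (nt a c) (nv lam eps a c) (fun y => nab lam eps b y k)).
  by apply: eq_bigr => y _; rewrite nabv_ee nab_cf.
- rewrite -(sum_br lam a b (fun x => nab lam eps x c k)).
  by apply: eq_bigr => y _; rewrite brv_ebas.
Qed.

Lemma sum_const_eq (R : realFieldType) (m : nat) (K : R) (F : 'I_m -> R) :
  (forall i, F i = K) -> \sum_(i < m) F i = m%:R * K.
Proof. by move=> H; rewrite (eq_bigr (fun=> K)) // sumr_const card_ord mulr_natl. Qed.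

Ltac cst K := rewrite (@sum_const_eq _ _ K); [| by move=> i; rewrite ?eqxx; field].

Definition RC {R : realFieldType} {m} (eps : R) (a b : idx m) : R :=
  match a, b with
  | inl false, inl false => m%:R * eps ^+ 2 / 2
  | inl true, inl true => m%:R / 2
  | inl _, inl _ => m%:R * eps / 2
  | inr (inl i), inr (inl j) => - (eps / 2) * (i == j)%:R
  | inr (inr i), inr (inr j) => - (eps / 2) * (i == j)%:R
  | _, _ => 0
  end.

Lemma Ric_cf (R : realFieldType) (m : nat) (lam : 'I_m -> R) eps b c :
  eps ^+ 2 - 1 != 0 ->
  Ric lam eps b c = RC eps b c.
Proof.
move=> hd; rewrite /Ric.
rewrite (eq_bigr (fun a => nv lam eps b c * (if a == nt a (nt b c) then nv lam eps a (nt b c) else 0)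
  - nv lam eps a c * (if a == nt b (nt a c) then nv lam eps b (nt a c) else 0)
  - bc lam a b * (if a == nt (bt a b) c then nv lam eps (bt a b) c else 0))); last first.
  by move=> a _; rewrite curv_cf // !nab_cf.
rewrite sum_idx /RC /nv /nt /bt /bc.
case: b => [[]|[j|j]]; case: c => [[]|[l|l]]; ordsplit; sumtac; ordsplit.
all: rewrite ?mulr1n ?mulr0n ?addr0; try solve [done | ring | field; done].
- by cst (1 / 4 : R); cst (1 / 4 : R); field.
- by cst (eps / 4); cst (eps / 4); field.
- by cst (eps / 4); cst (eps / 4); field.
- by cst (eps ^+ 2 / 4); cst (eps ^+ 2 / 4); field.
Qed.

Definition RO {R : realFieldType} {m} (eps : R) (a b : idx m) : R :=
  match a, b with
  | inl false, inl false => m%:R * eps / 2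
  | inl true, inl false => m%:R / 2
  | inr (inl i), inr (inl j) => - (eps / 2) * (i == j)%:R
  | inr (inr i), inr (inr j) => - (eps / 2) * (i == j)%:R
  | _, _ => 0
  end.

Lemma ricop_cf (R : realFieldType) (m : nat) (lam : 'I_m -> R) eps a k :
  eps ^+ 2 - 1 != 0 ->
  ricop lam eps a k = RO eps a k.
Proof.
move=> hd; rewrite /ricop.
rewrite (eq_bigr (fun b => RC eps a b * gcf eps b k)); last first.
  by move=> b _; rewrite Ric_cf // ginv_cf.
rewrite sum_idx /RO /RC /gcf.
case: a => [[]|[j|j]]; case: k => [[]|[l|l]]; ordsplit; sumtac; ordsplit.
all: rewrite ?mulr1n ?mulr0n ?addr0; try solve [done | ring | field; done].
Qed.

Lemma RO0_der (R : realFieldType) (m : nat) (lam : 'I_m -> R) :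
  is_derivation lam (RO (0 : R)).
Proof.
move=> a b k; rewrite sum_br !sum_idx /RO /bc /bt /br.
case: a => [[]|[i|i]]; case: b => [[]|[j|j]]; case: k => [[]|[l|l]]; ordsplit; sumtac; ordsplit.
all: rewrite ?mulr1n ?mulr0n ?addr0; try solve [done | ring | field; done].
Qed.

Lemma der_ext (R : realFieldType) (m : nat) (lam : 'I_m -> R) (D D' : idx m -> idx m -> R) :
  (forall a k, D a k = D' a k) -> is_derivation lam D -> is_derivation lam D'.
Proof.
move=> H HD a b k.
have e1 : \sum_c br lam a b c * D' c k = \sum_c br lam a b c * D c k.
  by apply: eq_bigr => ? _; rewrite H.
have e2 : \sum_c D' a c * br lam c b k = \sum_c D a c * br lam c b k.
  by apply: eq_bigr => ? _; rewrite H.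
have e3 : \sum_c D' b c * br lam a c k = \sum_c D b c * br lam a c k.
  by apply: eq_bigr => ? _; rewrite H.
by rewrite e1 e2 e3; apply: HD.
Qed.

Unset Implicit Arguments.

Theorem mainTheorem3 (R : realFieldType) (m : nat) (lam : 'I_m -> R)
    (eps c : R) (D : idx m -> idx m -> R) :
  (1 <= m)%N ->
  (forall j, lam j != 0) ->
  eps ^+ 2 != 1 ->
  is_derivation lam D ->
  solvsoliton_eq lam eps c D ->
  (eps = 0 /\ c = 0 /\ D eQ eP = m%:R / 2 /\ D eP eP = 0 /\
   (forall j : 'I_m, D (eX j) eP = 0 /\ D (eY j) eP = 0) /\
   (forall i j : 'I_m, D (eX j) (eX i) = 0 /\ D (eX j) (eY i) = 0)) /\
  is_steady_solvsoliton lam 0.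
Proof.
move=> hm hlam heps Hder Hsol.
have hd : eps ^+ 2 - 1 != 0 by rewrite subr_eq0.
have HD : forall a k, D a k = RO eps a k - c * (a == k)%:R.
  by move=> a k; rewrite -(ricop_cf lam) // Hsol; ring.
pose j0 : 'I_m := Ordinal hm.
have Hder' := der_ext HD Hder.
have E1 := Hder' (eX j0) (eY j0) eP.
have E2 := Hder' eQ (eX j0) (eY j0).
move: E1 E2; rewrite !sum_br !sum_idx /RO /bc /bt /br /=; sumtac; ordsplit.
rewrite ?mulr1n ?mulr0n ?addr0 => E1 E2.
have hc : c * lam j0 = 0 by lra.
move/eqP: hc; rewrite mulf_eq0 (negbTE (hlam j0)) orbF => /eqP hc; subst c.
have he : eps * (m%:R + 2) = 0 by lra.
have hm2 : 0 < m%:R + 2 :> R by have := ler0n R m; lra.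
move/eqP: he; rewrite mulf_eq0 (negbTE (lt0r_neq0 hm2)) orbF => /eqP he; subst eps.
split.
  rewrite !HD /RO /=; do 4! (split; first by rewrite ?eqxx /=; field).
  by split=> [j|i j]; rewrite !HD /RO /=; split; field.
rewrite /is_steady_solvsoliton; exists (@RO R m 0); split; first exact: RO0_der.
move=> a k; rewrite ricop_cf; first by ring.
by rewrite expr0n /= sub0r oppr_eq0 oner_eq0.
Qed.
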